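(* Let $(V,L,\varphi,E)$ be a valuation system. Then $\varphi$ is extendible if and only if $\varphi$ is $\Pi_{\aleph_1}$-extendible. Moreover, if $\varphi$ is extendible, then $\overline\varphi=\Pi_{\aleph_1}\varphi$.
   Context: $\aleph_1$ denotes the smallest uncountable ordinal. A valuation system $(V,L,\varphi,E)$ consists of: (i) a lattice $V$ which is $\sigma$-distributive (for every $a\in V$ and sequence $(b_n)$ with existing infimum, $\bigwedge_n(a\vee b_n)$ exists and equals $a\vee\bigwedge_n b_n$, and dually for suprema); (ii) a sublattice $L$ of $V$; (iii) a partially ordered abelian group $E$ which is R-complete (whenever $x_1\ge x_2\ge\cdots$ and $y_1\ge y_2\ge\cdots$ in $E$ are such that $\bigwedge_n(x_n+y_n)$ exists, $\bigwedge_n x_n$ and $\bigwedge_n y_n$ exist; dually for increasing sequences); (iv) a valuation $\varphi:L\to E$ (order-preserving, $\varphi(a\wedge b)+\varphi(a\vee b)=\varphi(a)+\varphi(b)$). A decreasing (resp. increasing) sequence $(a_n)$ in $L$ is $\varphi$-convergent if $\bigwedge_n a_n$ exists in $V$ and $\bigwedge_n\varphi(a_n)$ exists in $E$ (resp. with suprema). $\Pi L:=\{\bigwedge_n a_n:(a_n)\ \varphi\text{-convergent decreasing}\}$ and $\varphi$ is $\Pi$-extendible if there is a valuation $\Pi\varphi:\Pi L\to E$ with $\Pi\varphi(\bigwedge_n a_n)=\bigwedge_n\varphi(a_n)$ for all such sequences; $\Sigma L,\Sigma$-extendible, $\Sigma\varphi$ dually. Hierarchy (transfinite recursion): $\Pi_0\varphi=\Sigma_0\varphi=\varphi$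 on $L$; $\varphi$ is $\Pi_{\alpha+1}$-extendible iff it is $\Sigma_\alpha$-extendible and $\Sigma_\alpha\varphi$ is $\Pi$-extendible, with $\Pi_{\alpha+1}\varphi=\Pi(\Sigma_\alpha\varphi)$ on $\Pi(\Sigma_\alpha L)$; $\varphi$ is $\Sigma_{\alpha+1}$-extendible iff it is $\Pi_\alpha$-extendible and $\Pi_\alpha\varphi$ is $\Sigma$-extendible, with $\Sigma_{\alpha+1}\varphi=\Sigma(\Pi_\alpha\varphi)$; at a limit $\lambda$, $\varphi$ is $\Pi_\lambda$-extendible iff $\Pi_\alpha$-extendible for all $\alpha<\lambda$, and then $\Pi_\lambda\varphi$ is the common extension of the $\Pi_\alpha\varphi$ ($\alpha<\lambda$) on $\bigcup_{\alpha<\lambda}\Pi_\alpha L$; similarly $\Sigma_\lambda$. The hierarchy has collapsed at $Q$, where $Q=\Pi_\alpha\varphi$ or $Q=\Sigma_\alpha\varphi$, if $\varphi$ is $\Pi_{\alpha+1}$- and $\Sigma_{\alpha+1}$-extendible and $\Pi(Q)=Q=\Sigma(Q)$. $\varphi$ is extendible if the hierarchy has collapsed at some $Q$; this $Q$ is then unique and denoted $\overline\varphi$. *)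

(* Defs.v *)
(* V : latticeType, E : porderZmodType (+ translation
   invariance as a hypothesis), subsets as predicates V -> Prop, partial maps
   as total maps V -> E considered only on their domain. *)
From HB Require Import structures.
From mathcomp Require Import all_boot all_order all_algebra.
From Stdlib Require Import Relations Wellfounded.
Set Implicit Arguments. Unset Strict Implicit. Unset Printing Implicit Defensive.
Import Order.TTheory GRing.Theory Num.Theory.
Local Open Scope order_scope.

Section Lattices.
Context {d : Order.disp_t}.

Definition is_inf {T : porderType d} (s : nat -> T) (x : T) : Prop :=
  (forall n, x <= s n) /\ (forall y, (forall n, y <= s n) -> y <= x).
Definition is_sup {T : porderType d} (s : nat -> T) (x : T) : Prop :=
  (forall n, s n <= x) /\ (forall y, (forall n, s n <= y) -> x <= y).

Definition decreasing {T : porderType d} (s : nat -> T) : Prop :=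
  forall n, s n.+1 <= s n.
Definition increasing {T : porderType d} (s : nat -> T) : Prop :=
  forall n, s n <= s n.+1.

Definition sigma_distributive (V : latticeType d) : Prop :=
  (forall (a : V) (b : nat -> V) (x : V),
      is_inf b x -> is_inf (fun n => a `|` b n) (a `|` x)) /\
  (forall (a : V) (b : nat -> V) (x : V),
      is_sup b x -> is_sup (fun n => a `&` b n) (a `&` x)).

Definition sublattice (V : latticeType d) (S : V -> Prop) : Prop :=
  forall a b, S a -> S b -> S (a `&` b) /\ S (a `|` b).
End Lattices.

Definition po_group (E : porderZmodType) : Prop :=
  forall x y z : E, (x <= y)%O -> ((x + z)%R <= (y + z)%R)%O.

Definition R_complete (E : porderZmodType) : Prop :=
  (forall x y : nat -> E, decreasing x -> decreasing y ->
     (exists s, is_inf (fun n => (x n + y n)%R) s) ->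
     (exists a, is_inf x a) /\ (exists b, is_inf y b)) /\
  (forall x y : nat -> E, increasing x -> increasing y ->
     (exists s, is_sup (fun n => (x n + y n)%R) s) ->
     (exists a, is_sup x a) /\ (exists b, is_sup y b)).

Section Valuations.
Context {d : Order.disp_t} {V : latticeType d} {E : porderZmodType}.

Definition valuation_on (S : V -> Prop) (f : V -> E) : Prop :=
  sublattice S /\
  (forall a b, S a -> S b -> (a <= b)%O -> (f a <= f b)%O) /\
  (forall a b, S a -> S b -> (f (a `&` b) + f (a `|` b) = f a + f b)%R).

Definition valuation_system (L : V -> Prop) (phi : V -> E) : Prop :=
  sigma_distributive V /\ sublattice L /\ po_group E /\ R_complete E /\
  valuation_on L phi.

Definition dec_conv (S : V -> Prop) (f : V -> E) (a : nat -> V) (x : V) (e : E)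
  : Prop :=
  (forall n, S (a n)) /\ decreasing a /\ is_inf a x /\ is_inf (fun n => f (a n)) e.
Definition inc_conv (S : V -> Prop) (f : V -> E) (a : nat -> V) (x : V) (e : E)
  : Prop :=
  (forall n, S (a n)) /\ increasing a /\ is_sup a x /\ is_sup (fun n => f (a n)) e.

Definition PiSet (S : V -> Prop) (f : V -> E) (x : V) : Prop :=
  exists a e, dec_conv S f a x e.
Definition SigmaSet (S : V -> Prop) (f : V -> E) (x : V) : Prop :=
  exists a e, inc_conv S f a x e.

Definition Pi_ext_to (S : V -> Prop) (f : V -> E) (D : V -> Prop) (g : V -> E)
  : Prop :=
  (forall x, D x <-> PiSet S f x) /\ valuation_on D g /\
  (forall a x e, dec_conv S f a x e -> g x = e).
Definition Sigma_ext_to (S : V -> Prop) (f : V -> E) (D : V -> Prop) (g : V -> E)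
  : Prop :=
  (forall x, D x <-> SigmaSet S f x) /\ valuation_on D g /\
  (forall a x e, inc_conv S f a x e -> g x = e).

Definition collapsed (D : V -> Prop) (f : V -> E) : Prop :=
  Pi_ext_to D f D f /\ Sigma_ext_to D f D f.
End Valuations.

(* Ordinals are represented by elements of well-ordered types: the element w
   of (W, lt) stands for the order type of {x | lt x w}. *)
Definition well_order {W : Type} (lt : W -> W -> Prop) : Prop :=
  (forall x, ~ lt x x) /\ (forall x y z, lt x y -> lt y z -> lt x z) /\
  (forall x y, lt x y \/ x = y \/ lt y x) /\ well_founded lt.

Definition is_bottom {W : Type} (lt : W -> W -> Prop) (x : W) : Prop :=
  forall y, ~ lt y x.
Definition is_succ {W : Type} (lt : W -> W -> Prop) (v x : W) : Prop :=
  lt v x /\ (forall y, lt v y -> lt y x -> False).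
Definition is_limit {W : Type} (lt : W -> W -> Prop) (x : W) : Prop :=
  ~ is_bottom lt x /\ (forall v, ~ is_succ lt v x).

Definition countable_below {W : Type} (lt : W -> W -> Prop) (v : W) : Prop :=
  exists f : W -> nat, forall x y, lt x v -> lt y v -> f x = f y -> x = y.
Definition is_aleph1 {W : Type} (lt : W -> W -> Prop) (w : W) : Prop :=
  ~ countable_below lt w /\ (forall v, lt v w -> countable_below lt v).

Section Hierarchy.
Context {d : Order.disp_t} {V : latticeType d} {E : porderZmodType}.
Variables (L : V -> Prop) (phi : V -> E).
Context {W : Type} (lt : W -> W -> Prop).

(* A run of the Pi/Sigma hierarchy along W.  dP x (resp. dS x) says that phi
   is Pi_x- (resp. Sigma_x-) extendible, and then (PD x, Pf x) (resp.
   (SD x, Sf x)) is Pi_x phi (resp. Sigma_x phi); the clauses are exactly the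
   transfinite recursion, so such data is unique where defined. *)
Definition is_run (dP dS : W -> Prop) (PD SD : W -> V -> Prop)
  (Pf Sf : W -> V -> E) : Prop :=
  forall x,
  (dP x ->
     (is_bottom lt x -> (forall u, PD x u <-> L u) /\
                        (forall u, L u -> Pf x u = phi u)) /\
     (forall v, is_succ lt v x -> dS v /\ Pi_ext_to (SD v) (Sf v) (PD x) (Pf x)) /\
     (is_limit lt x -> (forall v, lt v x -> dP v) /\
        (forall u, PD x u <-> exists v, lt v x /\ PD v u) /\
        (forall v u, lt v x -> PD v u -> Pf x u = Pf v u))) /\
  (dS x ->
     (is_bottom lt x -> (forall u, SD x u <-> L u) /\
                        (forall u, L u -> Sf x u = phi u)) /\
     (forall v, is_succ lt v x -> dP v /\ Sigma_ext_to (PD v) (Pf v) (SD x) (Sf x)) /\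
     (is_limit lt x -> (forall v, lt v x -> dS v) /\
        (forall u, SD x u <-> exists v, lt v x /\ SD v u) /\
        (forall v u, lt v x -> SD v u -> Sf x u = Sf v u))).

Definition Pi_extendible_at (w : W) : Prop :=
  exists dP dS PD SD Pf Sf, is_run dP dS PD SD Pf Sf /\ dP w.

Definition is_Pi_level (w : W) (D : V -> Prop) (g : V -> E) : Prop :=
  exists dP dS PD SD Pf Sf, is_run dP dS PD SD Pf Sf /\ dP w /\
    (forall u, D u <-> PD w u) /\ (forall u, D u -> g u = Pf w u).
End Hierarchy.

(* (D, g) is the (unique) Q = Pi_alpha phi or Sigma_alpha phi at which the
   hierarchy has collapsed, for some ordinal alpha *)
Definition is_closure_value {d : Order.disp_t} {V : latticeType d}
  {E : porderZmodType} (L : V -> Prop) (phi : V -> E)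
  (D : V -> Prop) (g : V -> E) : Prop :=
  exists (W : Type) (lt : W -> W -> Prop) (alpha beta : W),
    well_order lt /\ is_succ lt alpha beta /\
    exists dP dS PD SD Pf Sf, is_run L phi lt dP dS PD SD Pf Sf /\
      dP beta /\ dS beta /\
      ((collapsed (PD alpha) (Pf alpha) /\
        (forall u, D u <-> PD alpha u) /\ (forall u, D u -> g u = Pf alpha u)) \/
       (collapsed (SD alpha) (Sf alpha) /\
        (forall u, D u <-> SD alpha u) /\ (forall u, D u -> g u = Sf alpha u))).

Definition extendible {d : Order.disp_t} {V : latticeType d}
  {E : porderZmodType} (L : V -> Prop) (phi : V -> E) : Prop :=
  exists D g, is_closure_value L phi D g.

(* Main.v *)
Require Import Defs.
From HB Require Import structures.
From mathcomp Require Import all_boot all_order all_algebra.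
From Stdlib Require Import Classical ClassicalEpsilon Wellfounded.
Set Implicit Arguments. Unset Strict Implicit. Unset Printing Implicit Defensive.
Import Order.TTheory GRing.Theory.
Local Open Scope order_scope.


Section Gen.
Context {d : Order.disp_t} {V : latticeType d} {E : porderZmodType}.

Definition CONV (b : bool) (S : V -> Prop) (f : V -> E) (a : nat -> V) (x : V) (e : E) : Prop :=
  if b then dec_conv S f a x e else inc_conv S f a x e.
Definition SET (b : bool) (S : V -> Prop) (f : V -> E) (x : V) : Prop :=
  exists a e, CONV b S f a x e.
Definition EXT (b : bool) (S : V -> Prop) (f : V -> E) (D : V -> Prop) (g : V -> E) : Prop :=
  (forall x, D x <-> SET b S f x) /\ valuation_on D g /\
  (forall a x e, CONV b S f a x e -> g x = e).

Lemma is_inf_ext {d' : Order.disp_t} {T : porderType d'} (s t : nat -> T) x :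
  (forall n, s n = t n) -> is_inf s x -> is_inf t x.
Proof. move=> H [H1 H2]; split=> [n|y Hy]; first by rewrite -H. apply: H2 => n; by rewrite H. Qed.
Lemma is_sup_ext {d' : Order.disp_t} {T : porderType d'} (s t : nat -> T) x :
  (forall n, s n = t n) -> is_sup s x -> is_sup t x.
Proof. move=> H [H1 H2]; split=> [n|y Hy]; first by rewrite -H. apply: H2 => n; by rewrite H. Qed.

Lemma is_inf_const {d' : Order.disp_t} {T : porderType d'} (x : T) : is_inf (fun _ => x) x.
Proof. by split=> [n|y Hy]; [exact: le_refl | exact: Hy 0]. Qed.
Lemma is_sup_const {d' : Order.disp_t} {T : porderType d'} (x : T) : is_sup (fun _ => x) x.
Proof. by split=> [n|y Hy]; [exact: le_refl | exact: Hy 0]. Qed.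

Lemma CONV_const b S f u : S u -> CONV b S f (fun _ => u) u (f u).
Proof.
move=> Su; case: b; (split; [by [] | split; [move=> n; exact: le_refl | split]]);
  (exact: is_inf_const || exact: is_sup_const).
Qed.

Lemma SET_const b S f u : S u -> SET b S f u.
Proof. by move=> Su; exists (fun _ => u), (f u); apply: CONV_const. Qed.

Lemma CONV_tr b S f S' f' a x e :
  (forall u, S u -> S' u /\ f' u = f u) -> CONV b S f a x e -> CONV b S' f' a x e.
Proof.
move=> H; case: b => [[Ha [Hd [Hi He]]]|[Ha [Hd [Hi He]]]]; (split; [move=> n; exact: (H _ (Ha n)).1|]);
  (split; [done|split; [done|]]).
- by apply: is_inf_ext He => n; rewrite (H _ (Ha n)).2.
- by apply: is_sup_ext He => n; rewrite (H _ (Ha n)).2.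
Qed.

Lemma SET_tr b S f S' f' x :
  (forall u, S u -> S' u /\ f' u = f u) -> SET b S f x -> SET b S' f' x.
Proof. by move=> H [a [e C]]; exists a, e; apply: CONV_tr C. Qed.

Lemma CONV_S b S f a x e : CONV b S f a x e -> forall n, S (a n).
Proof. by case: b => -[]. Qed.

Lemma EXT_const b S f D g u : EXT b S f D g -> S u -> D u /\ g u = f u.
Proof.
move=> [H1 [_ H3]] Su; split; first by apply/H1; apply: SET_const.
exact: (H3 _ _ _ (CONV_const b f Su)).
Qed.

Lemma val_tr (D : V -> Prop) (g : V -> E) (D' : V -> Prop) (g' : V -> E) :
  (forall u, D u <-> D' u) -> (forall u, D u -> g u = g' u) ->
  valuation_on D g -> valuation_on D' g'.
Proof.
move=> HD Hg [Hs [Hm Hmod]]; split; [|split].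
- move=> a b /HD Da /HD Db; have [? ?] := Hs _ _ Da Db; split; exact/HD.
- move=> a b /HD Da /HD Db ab; rewrite -!Hg //; exact: Hm.
- move=> a b /HD Da /HD Db; have [? ?] := Hs _ _ Da Db; rewrite -!Hg //; exact: Hmod.
Qed.

Lemma EXT_tr b (S : V -> Prop) (f : V -> E) (D : V -> Prop) (g : V -> E) (S' : V -> Prop) (f' : V -> E) (D' : V -> Prop) (g' : V -> E) :
  (forall u, S u <-> S' u) -> (forall u, S u -> f u = f' u) ->
  (forall u, D u <-> D' u) -> (forall u, D u -> g u = g' u) ->
  EXT b S f D g -> EXT b S' f' D' g'.
Proof.
move=> HS Hf HD Hg [H1 [H2 H3]]; split; [|split].
- move=> x; split.
  + move/HD/H1; apply: SET_tr => u Su; split; [exact/HS|by rewrite Hf].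
  + move=> Hx; apply/HD/H1; move: Hx; apply: SET_tr => u /HS Su; split; [done|by rewrite Hf].
- exact: val_tr H2.
- move=> a x e C.
  have C' : CONV b S f a x e by move: C; apply: CONV_tr => u /HS Su; split; [done|by rewrite Hf].
  have Dx : D x by apply/H1; exists a, e.
  by rewrite -Hg //; apply: H3 C'.
Qed.

Lemma EXT_Pi (S : V -> Prop) (f : V -> E) (D : V -> Prop) (g : V -> E) : Pi_ext_to S f D g <-> EXT true S f D g.
Proof. by split=> H; exact H. Qed.
Lemma EXT_Sigma (S : V -> Prop) (f : V -> E) (D : V -> Prop) (g : V -> E) : Sigma_ext_to S f D g <-> EXT false S f D g.
Proof. by split=> H; exact H. Qed.

Definition closedp (L : V -> Prop) (phi : V -> E) (D : V -> Prop) (g : V -> E) :=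
  (forall b, EXT b D g D g) /\ (forall u, L u -> D u /\ g u = phi u).

Lemma closedp_collapsed (L : V -> Prop) (phi : V -> E) (D : V -> Prop) (g : V -> E) : closedp L phi D g -> collapsed D g.
Proof. by move=> [H _]; split; [exact: (H true) | exact: (H false)]. Qed.

Lemma closedp_tr (L : V -> Prop) (phi : V -> E) (D : V -> Prop) (g : V -> E) (D' : V -> Prop) (g' : V -> E) :
  (forall u, D u <-> D' u) -> (forall u, D u -> g u = g' u) ->
  closedp L phi D g -> closedp L phi D' g'.
Proof.
move=> HD Hg [H1 H2]; split.
- by move=> b; apply: EXT_tr (H1 b).
- move=> u /H2 [Du gu]; split; [exact/HD | by rewrite -Hg].
Qed.

End Gen.


Section Ord.
Context {W : Type} (lt : W -> W -> Prop) (hW : well_order lt).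

Lemma wf_min (P : W -> Prop) x : P x -> exists m, P m /\ forall z, lt z m -> ~ P z.
Proof.
move=> Px; apply: NNPP => Hn; move: Px; apply/(_ : ~ P x).
have [_ [_ [_ wf]]] := hW.
elim/(well_founded_ind wf): x => x IH Px; apply: Hn; exists x; split=> // z; exact: IH.
Qed.

Lemma wlt_irr x : ~ lt x x. Proof. by case: hW. Qed.
Lemma wlt_trans x y z : lt x y -> lt y z -> lt x z. Proof. by case: hW => _ [H _]; apply: H. Qed.
Lemma wlt_total x y : lt x y \/ x = y \/ lt y x. Proof. by case: hW => _ [_ [H _]]; apply: H. Qed.
Lemma wlt_wf : well_founded lt. Proof. by case: hW => _ [_ [_ H]]. Qed.

Lemma succ_exists v y : lt v y -> exists s, is_succ lt v s /\ (lt s y \/ s = y).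
Proof.
move=> vy; have [s [vs Hm]] := @wf_min (fun z => lt v z) y vy.
exists s; split; first by split=> // z vz zs; exact: Hm zs vz.
case: (wlt_total s y) => [H|[H|H]]; [by left|by right|].
by case: (Hm _ H vy).
Qed.

Lemma succ_le v y x : is_succ lt y x -> lt v x -> lt v y \/ v = y.
Proof.
move=> [yx Hs] vx; case: (wlt_total v y) => [H|[H|H]]; [by left|by right|].
by case: (Hs _ H vx).
Qed.

Lemma succ_unique y y' x : is_succ lt y x -> is_succ lt y' x -> y = y'.
Proof.
move=> sy sy'; case: (succ_le sy sy'.1) => [H|->] //.
by case: (sy'.2 _ H sy.1).
Qed.

Lemma trich x : is_bottom lt x \/ (exists v, is_succ lt v x) \/ is_limit lt x.
Proof.
case: (classic (is_bottom lt x)) => [|nb]; first by left.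
case: (classic (exists v, is_succ lt v x)) => [|ns]; first by right; left.
by right; right; split=> // v sv; apply: ns; exists v.
Qed.

Lemma limit_succ v y : is_limit lt y -> lt v y -> exists s, is_succ lt v s /\ lt s y.
Proof.
move=> [_ ns] vy; have [s [ss [sy|sy]]] := succ_exists vy; first by exists s.
by subst; case: (ns _ ss).
Qed.

Lemma not_bottom_lt x : ~ is_bottom lt x -> exists y, lt y x.
Proof. move=> nb; apply: NNPP => H; apply: nb => y yx; apply: H; by exists y. Qed.

End Ord.

Section Run.
Context {d : Order.disp_t} {V : latticeType d} {E : porderZmodType}.
Context {W : Type} (lt : W -> W -> Prop).

Definition lvR (PD SD : W -> V -> Prop) (b : bool) := if b then PD else SD.
Definition fvR (Pf Sf : W -> V -> E) (b : bool) := if b then Pf else Sf.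
Definition ddR (dP dS : W -> Prop) (b : bool) := if b then dP else dS.

Lemma run_gen (L : V -> Prop) (phi : V -> E) dP dS PD SD Pf Sf :
  is_run L phi lt dP dS PD SD Pf Sf -> forall b x, ddR dP dS b x ->
  (is_bottom lt x -> (forall u, lvR PD SD b x u <-> L u) /\
                     (forall u, L u -> fvR Pf Sf b x u = phi u)) /\
  (forall v, is_succ lt v x -> ddR dP dS (~~b) v /\
      EXT b (lvR PD SD (~~b) v) (fvR Pf Sf (~~b) v) (lvR PD SD b x) (fvR Pf Sf b x)) /\
  (is_limit lt x -> (forall v, lt v x -> ddR dP dS b v) /\
      (forall u, lvR PD SD b x u <-> exists v, lt v x /\ lvR PD SD b v u) /\
      (forall v u, lt v x -> lvR PD SD b v u -> fvR Pf Sf b x u = fvR Pf Sf b v u)).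
Proof. by move=> R [] x; case: (R x) => RP RS; [exact: RP | exact: RS]. Qed.

Context (hW : well_order lt).

Lemma mono_gen (R : W -> Prop) (Rdown : forall x y, R x -> lt y x -> R y)
  (L : V -> Prop) (h : V -> E) (lvl : bool -> W -> V -> Prop)
  (H1 : forall b x u, R x -> is_bottom lt x -> (lvl b x u <-> L u))
  (H2 : forall b x y u, R x -> is_succ lt y x -> (lvl b x u <-> SET b (lvl (~~b) y) h u))
  (H3 : forall b x u, R x -> is_limit lt x -> (lvl b x u <-> exists v, lt v x /\ lvl b v u)) :
  forall x, R x -> forall b v u, lt v x -> lvl b v u -> lvl b x u.
Proof.
move=> x; elim/(well_founded_ind (wlt_wf hW)): x => x IH Rx b v u vx Hv.
have [bot|[[y sy]|lim]] := @trich _ lt x; [by exfalso; exact: (bot v vx) | | by apply/(H3 b x u Rx lim); exists v].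
have Ry : R y by apply: Rdown Rx sy.1.
have Step : forall c w, lvl c y w -> lvl c x w.
  move=> c w Hw; apply/(H2 c x y w Rx sy).
  have [boty|[[t st]|limy]] := @trich _ lt y.
  - by apply: SET_const; apply/H1 => //; apply/(H1 c y w Ry boty).
  - move/(H2 c y t w Ry st): Hw; apply: SET_tr => z Hz; split=> //.
    by apply: (IH y sy.1 Ry _ t) => //; exact: st.1.
  - move/(H3 c y w Ry limy): Hw => [v' [v'y Hv']].
    have [s [ss sy']] := limit_succ hW limy v'y.
    have Hs : lvl (~~c) s w.
      apply/(H2 (~~c) s v' w (Rdown _ _ Ry sy') ss); rewrite negbK.
      exact: SET_const.
    apply: SET_const; exact: (IH y sy.1 Ry _ s).
have [vy|vy] := succ_le hW sy vx; last by subst; exact: Step.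
by apply: Step; apply: (IH y sy.1 Ry _ v).
Qed.

End Run.


Lemma dec_le {d' : Order.disp_t} {T : porderType d'} (a : nat -> T) :
  decreasing a -> forall m n, (m <= n)%N -> a n <= a m.
Proof.
move=> Ha m n; elim: n => [|n IH]; first by rewrite leqn0 => /eqP ->.
rewrite leq_eqVlt => /orP [/eqP ->|Hmn]; first exact: le_refl.
exact: le_trans (Ha n) (IH Hmn).
Qed.
Lemma inc_le {d' : Order.disp_t} {T : porderType d'} (a : nat -> T) :
  increasing a -> forall m n, (m <= n)%N -> a m <= a n.
Proof.
move=> Ha m n; elim: n => [|n IH]; first by rewrite leqn0 => /eqP ->.
rewrite leq_eqVlt => /orP [/eqP ->|Hmn]; first exact: le_refl.
exact: le_trans (IH Hmn) (Ha n).
Qed.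

Section Grp.
Context {E : porderZmodType} (po : po_group E).

Lemma po_l (a b c : E) : a <= b -> (c + a)%R <= (c + b)%R.
Proof. by move=> H; rewrite ![(c + _)%R]addrC; apply: po. Qed.
Lemma po2 (a b c e : E) : a <= b -> c <= e -> (a + c)%R <= (b + e)%R.
Proof. by move=> H1 H2; apply: le_trans (po c H1) (po_l b H2). Qed.

Lemma inf_add (x y : nat -> E) ex ey : decreasing x -> decreasing y ->
  is_inf x ex -> is_inf y ey -> is_inf (fun n => x n + y n)%R (ex + ey)%R.
Proof.
move=> Hx Hy [ix1 ix2] [iy1 iy2]; split=> [n|z Hz]; first exact: po2.
have K : forall n m, z <= (x m + y n)%R.
  move=> n m; apply: le_trans (Hz (maxn m n)) _.
  by apply: po2; [apply: dec_le Hx _ _ (leq_maxl m n) | apply: dec_le Hy _ _ (leq_maxr m n)].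
have K2 : forall n, (z - y n)%R <= ex.
  move=> n; apply: ix2 => m; have := po (- y n)%R (K n m); by rewrite addrK.
have K3 : forall n, (z - ex)%R <= y n.
  move=> n; have := po (y n - ex)%R (K2 n).
  by rewrite addrA subrK [(ex + _)%R]addrC subrK.
have := po ex (iy2 _ K3); by rewrite subrK addrC.
Qed.

Lemma sup_add (x y : nat -> E) ex ey : increasing x -> increasing y ->
  is_sup x ex -> is_sup y ey -> is_sup (fun n => x n + y n)%R (ex + ey)%R.
Proof.
move=> Hx Hy [ix1 ix2] [iy1 iy2]; split=> [n|z Hz]; first exact: po2.
have K : forall n m, (x m + y n)%R <= z.
  move=> n m; apply: le_trans _ (Hz (maxn m n)).
  by apply: po2; [apply: inc_le Hx _ _ (leq_maxl m n) | apply: inc_le Hy _ _ (leq_maxr m n)].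
have K2 : forall n, ex <= (z - y n)%R.
  move=> n; apply: ix2 => m; have := po (- y n)%R (K n m); by rewrite addrK.
have K3 : forall n, y n <= (z - ex)%R.
  move=> n; have := po (y n - ex)%R (K2 n).
  by rewrite [X in _ <= X]addrA subrK [X in X <= _]addrC subrK.
have := po ex (iy2 _ K3); by rewrite subrK addrC.
Qed.
End Grp.

Section Lat.
Context {d : Order.disp_t} {V : latticeType d}.

Lemma meet_inf (a b : nat -> V) u1 u2 : is_inf a u1 -> is_inf b u2 ->
  is_inf (fun n => a n `&` b n) (u1 `&` u2).
Proof.
move=> [a1 a2] [b1 b2]; split=> [n|y Hy]; first exact: leI2.
rewrite lexI; apply/andP; split; [apply: a2 | apply: b2] => n;
  apply: le_trans (Hy n) _; [exact: leIl | exact: leIr].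
Qed.

Lemma join_sup (a b : nat -> V) u1 u2 : is_sup a u1 -> is_sup b u2 ->
  is_sup (fun n => a n `|` b n) (u1 `|` u2).
Proof.
move=> [a1 a2] [b1 b2]; split=> [n|y Hy]; first exact: leU2.
rewrite leUx; apply/andP; split; [apply: a2 | apply: b2] => n;
  apply: le_trans _ (Hy n); [exact: leUl | exact: leUr].
Qed.

Context (sd : sigma_distributive V).

Lemma join_inf (a b : nat -> V) u1 u2 : decreasing a -> decreasing b ->
  is_inf a u1 -> is_inf b u2 -> is_inf (fun n => a n `|` b n) (u1 `|` u2).
Proof.
move=> da db ia ib; split=> [n|y Hy]; first exact: leU2 (ia.1 n) (ib.1 n).
have K : forall m, y <= a m `|` u2.
  move=> m; have [_ H] := sd.1 (a m) b u2 ib; apply: H => n.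
  apply: le_trans (Hy (maxn m n)) _.
  by apply: leU2; [apply: dec_le da _ _ (leq_maxl m n) | apply: dec_le db _ _ (leq_maxr m n)].
have [_ H] := sd.1 u2 a u1 ia; rewrite joinC; apply: H => m; rewrite joinC; exact: K.
Qed.

Lemma meet_sup (a b : nat -> V) u1 u2 : increasing a -> increasing b ->
  is_sup a u1 -> is_sup b u2 -> is_sup (fun n => a n `&` b n) (u1 `&` u2).
Proof.
move=> da db ia ib; split=> [n|y Hy]; first exact: leI2 (ia.1 n) (ib.1 n).
have K : forall m, a m `&` u2 <= y.
  move=> m; have [_ H] := sd.2 (a m) b u2 ib; apply: H => n.
  apply: le_trans _ (Hy (maxn m n)).
  by apply: leI2; [apply: inc_le da _ _ (leq_maxl m n) | apply: inc_le db _ _ (leq_maxr m n)].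
have [_ H] := sd.2 u2 a u1 ia; rewrite meetC; apply: H => m; rewrite meetC; exact: K.
Qed.

Context {E : porderZmodType} (po : po_group E) (rc : R_complete E).

Lemma SET_sublattice b (D : V -> Prop) (g : V -> E) (S : V -> Prop) :
  valuation_on D g -> (forall u, S u -> D u) -> sublattice S -> sublattice (SET b S g).
Proof.
move=> [_ [gm gmod]] SD sS u1 u2 [a [e1 Ca]] [c [e2 Cc]].
have Sa := CONV_S Ca; have Sc := CONV_S Cc.
pose m n := a n `&` c n; pose j n := a n `|` c n.
have Sm n : S (m n) by exact: (sS _ _ (Sa n) (Sc n)).1.
have Sj n : S (j n) by exact: (sS _ _ (Sa n) (Sc n)).2.
have gsum : forall n, (g (a n) + g (c n))%R = (g (m n) + g (j n))%R.
  by move=> n; rewrite gmod //; apply: SD.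
case: b Ca Cc => [[_ [da [ia ie1]]] [_ [dc [ic ie2]]]|[_ [da [ia ie1]]] [_ [dc [ic ie2]]]].
- have dm : decreasing m by move=> n; exact: leI2.
  have dj : decreasing j by move=> n; exact: leU2.
  have dgm : decreasing (fun n => g (m n)) by move=> n; apply: gm => //; apply: SD.
  have dgj : decreasing (fun n => g (j n)) by move=> n; apply: gm => //; apply: SD.
  have dga : decreasing (fun n => g (a n)) by move=> n; apply: gm => //; apply: SD.
  have dgc : decreasing (fun n => g (c n)) by move=> n; apply: gm => //; apply: SD.
  have isum := is_inf_ext gsum (inf_add po dga dgc ie1 ie2).
  have [[em Hem] [ej Hej]] := rc.1 _ _ dgm dgj (ex_intro _ _ isum).
  split; [exists m, em | exists j, ej]; (split; [by []|split; [by []|split]]) => //.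
  + exact: meet_inf.
  + exact: join_inf.
- have dm : increasing m by move=> n; exact: leI2.
  have dj : increasing j by move=> n; exact: leU2.
  have dgm : increasing (fun n => g (m n)) by move=> n; apply: gm => //; apply: SD.
  have dgj : increasing (fun n => g (j n)) by move=> n; apply: gm => //; apply: SD.
  have dga : increasing (fun n => g (a n)) by move=> n; apply: gm => //; apply: SD.
  have dgc : increasing (fun n => g (c n)) by move=> n; apply: gm => //; apply: SD.
  have isum := is_sup_ext gsum (sup_add po dga dgc ie1 ie2).
  have [[em Hem] [ej Hej]] := rc.2 _ _ dgm dgj (ex_intro _ _ isum).
  split; [exists m, em | exists j, ej]; (split; [by []|split; [by []|split]]) => //.
  + exact: meet_sup.
  + exact: join_sup.
Qed.
End Lat.


Section Emb.
Context {d : Order.disp_t} {V : latticeType d} {E : porderZmodType}.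
Context (L : V -> Prop) (phi : V -> E).

Lemma collapsed_EXT (D : V -> Prop) (g : V -> E) : collapsed D g -> forall b, EXT b D g D g.
Proof. by move=> [H1 H2] [] ; [exact: H1 | exact: H2]. Qed.

Context {W : Type} (lt : W -> W -> Prop) (hW : well_order lt).

Lemma Lsub dP dS PD SD Pf Sf : is_run L phi lt dP dS PD SD Pf Sf ->
  forall x b, ddR dP dS b x -> forall u, L u ->
  lvR PD SD b x u /\ fvR Pf Sf b x u = phi u.
Proof.
move=> R x; elim/(well_founded_ind (wlt_wf hW)): x => x IH b dx u Lu.
have [C1 [C2 C3]] := run_gen R dx.
have [bot|[[y sy]|lim]] := @trich _ lt x.
- by have [H1 H2] := C1 bot; split; [apply/H1 | apply: H2].
- have [dy Ey] := C2 _ sy; have [Hy Hf] := IH y sy.1 _ dy u Lu.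
  by have [? ->] := EXT_const Ey Hy; split.
- have [D1 [D2 D3]] := C3 lim.
  have [v vx] := not_bottom_lt lim.1.
  have [Hv Hf] := IH v vx _ (D1 v vx) u Lu.
  split; [apply/D2; by exists v | by rewrite (D3 v u vx Hv)].
Qed.

Lemma Emb (D : V -> Prop) (g : V -> E) dP dS PD SD Pf Sf :
  closedp L phi D g -> is_run L phi lt dP dS PD SD Pf Sf ->
  forall x b, ddR dP dS b x -> forall u, lvR PD SD b x u ->
  D u /\ fvR Pf Sf b x u = g u.
Proof.
move=> [CE CL] R x; elim/(well_founded_ind (wlt_wf hW)): x => x IH b dx u Hu.
have [C1 [C2 C3]] := run_gen R dx.
have [bot|[[y sy]|lim]] := @trich _ lt x.
- have [H1 H2] := C1 bot; have Lu : L u by apply/H1.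
  have [Du gu] := CL u Lu; by rewrite H2 // gu.
- have [dy [Ey1 [Ey2 Ey3]]] := C2 _ sy.
  have [a [e Ca]] := (Ey1 u).1 Hu.
  have Ca' : CONV b D g a u e.
    by move: Ca; apply: CONV_tr => z Hz; have [? ?] := IH y sy.1 _ dy z Hz.
  have [CE1 [_ CE3]] := CE b.
  split; first by apply/CE1; exists a, e.
  by rewrite (Ey3 _ _ _ Ca) (CE3 _ _ _ Ca').
- have [D1 [D2 D3]] := C3 lim.
  have [v [vx Hv]] := (D2 u).1 Hu.
  have [Du gu] := IH v vx _ (D1 v vx) u Hv.
  by rewrite (D3 v u vx Hv).
Qed.
End Emb.

Section Build.
Context {d : Order.disp_t} {V : latticeType d} {E : porderZmodType}.
Context (L : V -> Prop) (g : V -> E).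
Context {W : Type} (lt : W -> W -> Prop).

Inductive lev : bool -> W -> V -> Prop :=
| levB b x u : is_bottom lt x -> L u -> lev b x u
| levP x y u a e : is_succ lt y x -> (forall n, lev false y (a n)) -> decreasing a ->
    is_inf a u -> is_inf (fun n => g (a n)) e -> lev true x u
| levS x y u a e : is_succ lt y x -> (forall n, lev true y (a n)) -> increasing a ->
    is_sup a u -> is_sup (fun n => g (a n)) e -> lev false x u
| levL b x v u : is_limit lt x -> lt v x -> lev b v u -> lev b x u.

Lemma lev_inv b x u : lev b x u ->
  (is_bottom lt x /\ L u) \/ (exists y, is_succ lt y x /\ SET b (lev (~~b) y) g u) \/
  (is_limit lt x /\ exists v, lt v x /\ lev b v u).
Proof.
case=> {b x u}.
- by move=> b x u bx Lu; left.
- move=> x y u a e sy Ha da ia ie; right; left; exists y; split=> //; exists a, e; split; [exact: Ha|split; [exact: da|split; [exact: ia|exact: ie]]].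
- move=> x y u a e sy Ha da ia ie; right; left; exists y; split=> //; exists a, e; split; [exact: Ha|split; [exact: da|split; [exact: ia|exact: ie]]].
- move=> b x v u lx vx Hv; right; right; split=> //; by exists v.
Qed.

Context (hW : well_order lt).

Lemma lev_bot b x u : is_bottom lt x -> (lev b x u <-> L u).
Proof.
move=> bx; split; last exact: levB.
move/lev_inv => [[]//|[[y [sy _]]|[lx _]]]; first by case: (bx y sy.1).
by case: lx.1.
Qed.

Lemma lev_succ b x y u : is_succ lt y x -> (lev b x u <-> SET b (lev (~~b) y) g u).
Proof.
move=> sy; split.
- move/lev_inv => [[bx _]|[[y' [sy' H]]|[lx _]]]; first by case: (bx y sy.1).
  + by have E0 := succ_unique hW sy sy'; subst y'.
  + by case: (lx.2 _ sy).
- case: b => -[a [e [Ha [da [ia ie]]]]]; [exact: levP sy Ha da ia ie | exact: levS sy Ha da ia ie].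
Qed.

Lemma lev_lim b x u : is_limit lt x -> (lev b x u <-> exists v, lt v x /\ lev b v u).
Proof.
move=> lx; split; last by move=> [v [vx Hv]]; exact: levL lx vx Hv.
move/lev_inv => [[bx _]|[[y [sy _]]|[_ H]]] //; first by case: lx.
by case: (lx.2 _ sy).
Qed.

Lemma lev_mono x b v u : lt v x -> lev b v u -> lev b x u.
Proof.
apply: (@mono_gen _ _ _ _ lt hW (fun _ => True)) => // => [b' x' u' _|b' x' y' u' _|b' x' u' _].
- exact: lev_bot.
- exact: lev_succ.
- exact: lev_lim.
Qed.

Context (phi : V -> E) (D : V -> Prop) (hC : closedp L phi D g).

Lemma lev_D b x u : lev b x u -> D u.
Proof.
have [CE CL] := hC.
elim=> {b x u}.
- by move=> b x u _ /CL [].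
- move=> x y u a e _ _ IH da ia ie; apply/((CE true).1 u); exists a, e.
  split; [exact: IH|split; [exact: da|split; [exact: ia|exact: ie]]].
- move=> x y u a e _ _ IH da ia ie; apply/((CE false).1 u); exists a, e.
  split; [exact: IH|split; [exact: da|split; [exact: ia|exact: ie]]].
- by [].
Qed.

Context (hsys : valuation_system L phi).

Lemma lev_sub x b : sublattice (lev b x).
Proof.
have [sd [sL [po [rc _]]]] := hsys.
have [CE CL] := hC.
have vD : valuation_on D g by have [_ [H _]] := CE true.
elim/(well_founded_ind (wlt_wf hW)): x b => x IH b.
have [bot|[[y sy]|lim]] := @trich _ lt x.
- move=> u1 u2 /(lev_bot _ _ bot) L1 /(lev_bot _ _ bot) L2.
  by have [? ?] := sL _ _ L1 L2; split; apply/lev_bot.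
- move=> u1 u2 /(lev_succ _ _ sy) H1 /(lev_succ _ _ sy) H2.
  have SL := SET_sublattice sd po rc vD (fun u Hu => lev_D Hu) (IH y sy.1 (~~b)).
  by have [? ?] := SL b _ _ H1 H2; split; apply/(lev_succ _ _ sy).
- move=> u1 u2 /(lev_lim _ _ lim) [v1 [v1x H1]] /(lev_lim _ _ lim) [v2 [v2x H2]].
  have [m [mx [H1' H2']]] : exists m, lt m x /\ lev b m u1 /\ lev b m u2.
    case: (wlt_total hW v1 v2) => [H|[H|H]].
    + by exists v2; split=> //; split=> //; apply: lev_mono H H1.
    + by subst; exists v2.
    + by exists v1; split=> //; split=> //; apply: lev_mono H H2.
  have [? ?] := IH m mx b _ _ H1' H2'.
  by split; apply/(lev_lim _ _ lim); exists m.
Qed.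

Lemma Build : is_run L phi lt (fun _ => True) (fun _ => True) (lev true) (lev false)
  (fun _ => g) (fun _ => g).
Proof.
have [CE CL] := hC.
have [vD1 [vD2 vD3]] : valuation_on D g by have [_ [H _]] := CE true.
have G : forall b x,
  (is_bottom lt x -> (forall u, lev b x u <-> L u) /\ (forall u, L u -> g u = phi u)) /\
  (forall v, is_succ lt v x -> True /\ EXT b (lev (~~b) v) g (lev b x) g) /\
  (is_limit lt x -> (forall v, lt v x -> True) /\
     (forall u, lev b x u <-> exists v, lt v x /\ lev b v u) /\
     (forall v u, lt v x -> lev b v u -> g u = g u)).
  move=> b x; split; [|split].
  - move=> bx; split; [move=> u; exact: lev_bot | by move=> u /CL []].
  - move=> v sv; split=> //; split; [|split].
    + move=> u; exact: lev_succ.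
    + split; first exact: lev_sub.
      split=> a c Ha Hc; [apply: vD2 | apply: vD3]; exact: lev_D Ha || exact: lev_D Hc.
    + move=> a u e Ca; have [_ [_ CE3]] := CE b; apply: CE3.
      by move: Ca; apply: CONV_tr => z Hz; split=> //; exact: lev_D Hz.
  - move=> lx; split=> //; split=> // u; exact: lev_lim.
by move=> x; split=> _; [exact: (G true x) | exact: (G false x)].
Qed.
End Build.

Lemma ClosVal {d : Order.disp_t} {V : latticeType d} {E : porderZmodType}
  (L : V -> Prop) (phi : V -> E) (D : V -> Prop) (g : V -> E) :
  is_closure_value L phi D g -> closedp L phi D g.
Proof.
move=> [W [lt [al [be [hW [sab [dP [dS [PD [SD [Pf [Sf [R [dPb [dSb H]]]]]]]]]]]]]]].
have dSa : dS al by have [_ [C2 _]] := run_gen R (b:=true) dPb; have [H' _] := C2 _ sab.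
have dPa : dP al by have [_ [C2 _]] := run_gen R (b:=false) dSb; have [H' _] := C2 _ sab.
case: H => [[coll [HD Hg]]|[coll [HD Hg]]].
- apply: (@closedp_tr _ _ _ _ _ (PD al) (Pf al)); [by move=> u; split=> /HD| by move=> u /HD Du; rewrite Hg //; apply/HD|].
  split; first exact: collapsed_EXT.
  by move=> u Lu; exact: (Lsub hW R (b:=true) dPa Lu).
- apply: (@closedp_tr _ _ _ _ _ (SD al) (Sf al)); [by move=> u; split=> /HD| by move=> u /HD Du; rewrite Hg //; apply/HD|].
  split; first exact: collapsed_EXT.
  by move=> u Lu; exact: (Lsub hW R (b:=false) dSa Lu).
Qed.


Section Aleph.
Context {W : Type} (lt : W -> W -> Prop) (hW : well_order lt) (w1 : W) (hw1 : is_aleph1 lt w1).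

Lemma w1_notbot : ~ is_bottom lt w1.
Proof. move=> bw; apply: hw1.1; exists (fun _ => 0%N) => x y xw; by case: (bw x xw). Qed.

Lemma w1_notsucc v : ~ is_succ lt v w1.
Proof.
move=> sv; apply: hw1.1; have [f Hf] := hw1.2 _ sv.1.
exists (fun x => if excluded_middle_informative (x = v) then 0%N else (f x).+1).
move=> x y xw yw.
case: excluded_middle_informative => [ex|nx]; case: excluded_middle_informative => [ey|ny] //; first by move=> _; rewrite -ey in ex.
case=> H; apply: Hf H.
- by case: (succ_le hW sv xw).
- by case: (succ_le hW sv yw).
Qed.

Lemma w1_lim : is_limit lt w1.
Proof. split; [exact: w1_notbot | exact: w1_notsucc]. Qed.

Lemma cofinal (vs : nat -> W) : (forall n, lt (vs n) w1) ->
  exists x, lt x w1 /\ forall n, lt (vs n) x.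
Proof.
move=> Hvs; apply: NNPP => Hn; apply: hw1.1.
have Hb : forall x, lt x w1 -> exists n, lt x (vs n) \/ x = vs n.
  move=> x xw; apply: NNPP => H; apply: Hn; exists x; split=> // n.
  case: (wlt_total hW (vs n) x) => [//|[E0|E0]]; exfalso; apply: H; exists n; [right|left] => //.
have Hc : forall n, exists f : W -> nat, forall x y, lt x (vs n) -> lt y (vs n) -> f x = f y -> x = y.
  by move=> n; exact: hw1.2 _ (Hvs n).
pose F n := proj1_sig (constructive_indefinite_description _ (Hc n)).
have HF : forall n x y, lt x (vs n) -> lt y (vs n) -> F n x = F n y -> x = y.
  by move=> n; exact: proj2_sig (constructive_indefinite_description _ (Hc n)).
pose N x := epsilon (inhabits 0%N) (fun n => lt x (vs n) \/ x = vs n).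
have HN : forall x, lt x w1 -> lt x (vs (N x)) \/ x = vs (N x).
  by move=> x xw; exact: epsilon_spec _ _ (Hb x xw).
exists (fun x => pickle (N x, if excluded_middle_informative (x = vs (N x)) then 0%N else (F (N x) x).+1)).
move=> x y xw yw /(pcan_inj pickleK) [].
case: excluded_middle_informative => [ex|nx]; case: excluded_middle_informative => [ey|ny] //= eN.
- by rewrite ex ey eN.
- case=> H; rewrite eN in H nx; apply: (HF (N y)) H.
  + by case: (HN x xw) => // H'; rewrite eN in H'.
  + by case: (HN y yw).
Qed.
End Aleph.

Lemma CONV_tr2 {d : Order.disp_t} {V : latticeType d} {E : porderZmodType}
  b (S : V -> Prop) (f : V -> E) (S' : V -> Prop) (f' : V -> E) a x e :
  (forall n, S' (a n)) -> (forall n, f' (a n) = f (a n)) -> CONV b S f a x e -> CONV b S' f' a x e.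
Proof.
move=> HS Hf; case: b => [[_ [Hd [Hi He]]]|[_ [Hd [Hi He]]]]; (split; [done|]);
  (split; [done|split; [done|]]).
- by apply: is_inf_ext He => n; rewrite Hf.
- by apply: is_sup_ext He => n; rewrite Hf.
Qed.

Section LemA.
Context {d : Order.disp_t} {V : latticeType d} {E : porderZmodType}.
Context (L : V -> Prop) (phi : V -> E).
Context {W : Type} (lt : W -> W -> Prop) (hW : well_order lt) (w1 : W) (hw1 : is_aleph1 lt w1).
Context (dP dS : W -> Prop) (PD SD : W -> V -> Prop) (Pf Sf : W -> V -> E).
Context (R : is_run L phi lt dP dS PD SD Pf Sf) (dPw : dP w1).

Let lv := lvR PD SD.
Let fv := fvR Pf Sf.
Let dd := ddR dP dS.

Lemma LemA : closedp L phi (PD w1) (Pf w1).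
Proof.
have lim := w1_lim hW hw1.
have [_ [_ C3]] := run_gen R (b:=true) dPw.
have [D1 [D2 D3]] := C3 lim.
have F3 : forall b v, lt v w1 -> ddR dP dS b v.
  case=> v vw; first exact: D1.
  have [s [ss sw]] := limit_succ hW lim vw.
  by have [_ [C2 _]] := run_gen R (b:=true) (D1 s sw); have [H _] := C2 _ ss.
have F4 : forall b v u, lt v w1 -> lvR PD SD b v u -> PD w1 u /\ Pf w1 u = fvR Pf Sf b v u.
  case=> v u vw Hu.
  - by split; [apply/D2; exists v | exact: D3].
  - have [s [ss sw]] := limit_succ hW lim vw.
    have [_ [C2 _]] := run_gen R (b:=true) (D1 s sw); have [_ Es] := C2 _ ss.
    have [Hs Hfs] := EXT_const Es Hu.
    by split; [apply/D2; exists s | transitivity (Pf s u); [exact: (D3 s u sw Hs) | exact: Hfs]].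
have Rd : forall x y, lt x w1 -> lt y x -> lt y w1.
  move=> x y xw yx; exact: (wlt_trans hW yx xw).
have H1' : forall b x u, lt x w1 -> is_bottom lt x -> (lvR PD SD b x u <-> L u).
  move=> b x u xw bx; exact: ((run_gen R (F3 b x xw)).1 bx).1.
have H2' : forall b x y u, lt x w1 -> is_succ lt y x ->
    (lvR PD SD b x u <-> SET b (lvR PD SD (~~b) y) (Pf w1) u).
  move=> b x y u xw sy; have yw := wlt_trans hW sy.1 xw.
  have [_ [C2 _]] := run_gen R (F3 b x xw); have [_ [E1 _]] := C2 _ sy.
  split.
  + move/E1; apply: SET_tr => z Hz; split=> //; exact: (F4 _ _ _ yw Hz).2.
  + move=> H; apply/E1; move: H; apply: SET_tr => z Hz; split=> //; exact: esym (F4 _ _ _ yw Hz).2.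
have H3' : forall b x u, lt x w1 -> is_limit lt x ->
    (lvR PD SD b x u <-> exists v, lt v x /\ lvR PD SD b v u).
  move=> b x u xw lx; exact: ((run_gen R (F3 b x xw)).2.2 lx).2.1.
have mono := mono_gen hW Rd H1' H2' H3'.
have common : forall a : nat -> V, (forall n, PD w1 (a n)) ->
    exists m, lt m w1 /\ forall n, PD m (a n).
  move=> a Ha.
  have Hv : forall n, exists v, lt v w1 /\ PD v (a n) by move=> n; apply/D2.
  pose vs n := proj1_sig (constructive_indefinite_description _ (Hv n)).
  have Hvs : forall n, lt (vs n) w1 /\ PD (vs n) (a n).
    by move=> n; exact: proj2_sig (constructive_indefinite_description _ (Hv n)).
  have [m [mw Hm]] := cofinal hW hw1 (fun n => (Hvs n).1).
  exists m; split=> // n; exact: (mono m mw true (vs n) _ (Hm n) (Hvs n).2).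
have val : valuation_on (PD w1) (Pf w1).
  have two : forall u1 u2, PD w1 u1 -> PD w1 u2 -> exists s, lt s w1 /\ PD s u1 /\ PD s u2 /\
      valuation_on (PD s) (Pf s).
    move=> u1 u2 H1 H2.
    have [m [mw Hm]] := common (fun n => if n is 0%N then u1 else u2) (fun n => if n is 0%N then H1 else H2).
    have [s [ss sw]] := limit_succ hW lim mw.
    have [_ [C2 _]] := run_gen R (b:=true) (D1 s sw); have [_ [_ [Vs _]]] := C2 _ ss.
    exists s; split=> //; split; [|split] => //.
    + exact: (mono s sw true m u1 ss.1 (Hm 0%N)).
    + exact: (mono s sw true m u2 ss.1 (Hm 1%N)).
  split; [|split].
  - move=> u1 u2 H1 H2; have [s [sw [Hs1 [Hs2 [Vs _]]]]] := two _ _ H1 H2.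
    have [M1 M2] := Vs _ _ Hs1 Hs2; split; [exact: (F4 true s _ sw M1).1 | exact: (F4 true s _ sw M2).1].
  - move=> u1 u2 H1 H2 le12; have [s [sw [Hs1 [Hs2 [_ [Vm _]]]]]] := two _ _ H1 H2.
    rewrite (F4 true s _ sw Hs1).2 (F4 true s _ sw Hs2).2; exact: Vm.
  - move=> u1 u2 H1 H2; have [s [sw [Hs1 [Hs2 [Vs [_ Vmod]]]]]] := two _ _ H1 H2.
    have [M1 M2] := Vs _ _ Hs1 Hs2.
    rewrite (F4 true s _ sw Hs1).2 (F4 true s _ sw Hs2).2.
    rewrite (F4 true s _ sw M1).2 (F4 true s _ sw M2).2; exact: Vmod.
have key : forall b a u e, CONV b (PD w1) (Pf w1) a u e -> PD w1 u /\ Pf w1 u = e.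
  move=> b a u e Ca.
  have [m [mw Hm]] := common a (CONV_S Ca).
  have [s [ss sw]] := limit_succ hW lim mw.
  have [s' [ss' sw']] := limit_succ hW lim sw.
  have Hin : forall c u, PD m u -> lvR PD SD c s u.
    case=> u0 H0; first exact: (mono s sw true m u0 ss.1 H0).
    have [_ [C2 _]] := run_gen R (F3 false s sw); have [_ Es] := C2 _ ss.
    exact: (EXT_const Es H0).1.
  have Ca' : CONV b (lvR PD SD (~~b) s) (fvR Pf Sf (~~b) s) a u e.
    apply: CONV_tr2 Ca => n; first exact: Hin.
    exact: esym (F4 _ _ _ sw (Hin _ _ (Hm n))).2.
  have [_ [C2 _]] := run_gen R (F3 b s' sw'); have [_ [E1 [_ E3]]] := C2 _ ss'.
  have Hu : lvR PD SD b s' u by apply/E1; exists a, e.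
  have [P1 P2] := F4 _ _ _ sw' Hu.
  by split=> //; rewrite P2; exact: E3 Ca'.
split.
- move=> b; split; [|split] => //.
  + move=> u; split; [exact: SET_const | move=> [a [e Ca]]; exact: (key _ _ _ _ Ca).1].
  + move=> a u e Ca; exact: (key _ _ _ _ Ca).2.
- move=> u Lu; exact: (Lsub hW R (b:=true) dPw Lu).
Qed.
End LemA.


Section Opt.
Context {W : Type} (lt : W -> W -> Prop) (hW : well_order lt) (w1 : W).

Definition ltO (a b : option W) : Prop :=
  match a, b with
  | Some x, Some y => lt x y
  | Some x, None => lt x w1 \/ x = w1
  | None, Some y => lt w1 y
  | None, None => False
  end.

Lemma ltO_wo : well_order ltO.
Proof.
have irr := wlt_irr hW; have tr := wlt_trans hW.
split; [|split; [|split]].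
- by move=> [x|] /=; [exact: irr|].
- move=> [x|] [y|] [z|] /=.
  + exact: tr.
  + move=> xy [yw|yw]; left; [exact: tr xy yw| by subst].
  + move=> [xw|xw] wz; [exact: tr xw wz | by subst].
  + by move=> _ [].
  + exact: tr.
  + move=> wy [yw|yw]; exfalso; [exact: (irr w1) (tr _ _ _ wy yw) | subst; exact: (irr _ wy)].
  + by [].
  + by [].
- move=> [x|] [y|] /=.
  + case: (wlt_total hW x y) => [H|[H|H]]; [by left|by right; left; rewrite H|by right; right].
  + case: (wlt_total hW x w1) => [H|[H|H]]; [by left; left|by left; right|by right; right].
  + case: (wlt_total hW y w1) => [H|[H|H]]; [by right; right; left|by right; right; right|by left].
  + by right; left.
- have AS : forall x, Acc ltO (Some x).
    move=> x; elim/(well_founded_ind (wlt_wf hW)): x => x IH.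
    constructor => -[y|] /= H; first exact: IH.
    constructor => -[z|] /= H'; last by [].
    case: H' => [zw|zw]; last by subst; exact: IH.
    exact: IH (tr _ _ _ zw H).
  move=> [x|]; first exact: AS.
  constructor => -[z|] /= H; last by [].
  exact: AS.
Qed.

Lemma ltO_succ : is_succ ltO (Some w1) None.
Proof.
split; first by right.
move=> [z|] /= wz; last by [].
move=> [zw|zw]; [exact: (wlt_irr hW (wlt_trans hW wz zw)) | subst; exact: (wlt_irr hW wz)].
Qed.

Lemma ltO_aleph1 : is_aleph1 lt w1 -> is_aleph1 ltO (Some w1).
Proof.
move=> [H1 H2]; split.
- move=> [f Hf]; apply: H1; exists (fun x => f (Some x)) => x y xw yw E0.
  by have [] := Hf (Some x) (Some y) xw yw E0.
- move=> [v|] /= vw; last by case: (wlt_irr hW (x:=w1)).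
  have [f Hf] := H2 v vw.
  exists (fun o => if o is Some x then f x else 0%N) => -[x|] [y|] /= xv yv E0.
  + by rewrite (Hf x y xv yv E0).
  all: exfalso; apply: (wlt_irr hW (x:=v)).
  all: first [exact: (wlt_trans hW vw xv) | exact: (wlt_trans hW vw yv)].
Qed.
End Opt.

Lemma ClosVal_min {d : Order.disp_t} {V : latticeType d} {E : porderZmodType}
  (L : V -> Prop) (phi : V -> E) (D : V -> Prop) (g : V -> E) (D' : V -> Prop) (g' : V -> E) :
  is_closure_value L phi D g -> closedp L phi D' g' -> forall u, D u -> D' u /\ g u = g' u.
Proof.
move=> [W [lt [al [be [hW [sab [dP [dS [PD [SD [Pf [Sf [R [dPb [dSb H]]]]]]]]]]]]]]] C u Du.
have dSa : dS al by have [_ [C2 _]] := run_gen R (b:=true) dPb; have [H' _] := C2 _ sab.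
have dPa : dP al by have [_ [C2 _]] := run_gen R (b:=false) dSb; have [H' _] := C2 _ sab.
case: H => [[coll [HD Hg]]|[coll [HD Hg]]].
- have [H1 H2] := Emb hW C R (b:=true) dPa ((HD u).1 Du).
  by split=> //; rewrite Hg.
- have [H1 H2] := Emb hW C R (b:=false) dSa ((HD u).1 Du).
  by split=> //; rewrite Hg.
Qed.

Local Close Scope order_scope.
Unset Implicit Arguments.
Set Strict Implicit.

Theorem corollary5p33 (d : Order.disp_t) (V : latticeType d)
  (E : porderZmodType) (L : V -> Prop) (phi : V -> E)
  (hsys : valuation_system L phi)
  (W : Type) (lt : W -> W -> Prop) (hW : well_order lt)
  (w1 : W) (hw1 : is_aleph1 lt w1) :
  (extendible L phi <-> Pi_extendible_at L phi lt w1) /\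
  (extendible L phi ->
   forall (D : V -> Prop) (g : V -> E), is_closure_value L phi D g ->
   forall (P : V -> Prop) (h : V -> E), is_Pi_level L phi lt w1 P h ->
   (forall u, D u <-> P u) /\ (forall u, D u -> g u = h u)).
Proof.
split; [split|].
- move=> [D [g Hcv]]; have C := ClosVal Hcv.
  exists (fun _ => True), (fun _ => True), (lev L g lt true), (lev L g lt false),
    (fun _ => g), (fun _ => g).
  have B0 := Build hW C hsys. split; last by []. exact: B0.
- move=> [dP [dS [PD [SD [Pf [Sf [R dPw]]]]]]].
  have C := LemA hW hw1 R dPw.
  have hW' := ltO_wo hW w1.
  have R' := Build hW' C hsys.
  have C' := LemA hW' (ltO_aleph1 hW hw1) R' I.
  exists (lev L (Pf w1) (ltO lt w1) true (Some w1)), (Pf w1).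
  exists (option W), (ltO lt w1), (Some w1), None.
  split=> //; split; first exact: ltO_succ.
  exists (fun _ => True), (fun _ => True), (lev L (Pf w1) (ltO lt w1) true),
    (lev L (Pf w1) (ltO lt w1) false), (fun _ => Pf w1), (fun _ => Pf w1).
  split=> //; split=> //; split=> //; left.
  by split; [exact: closedp_collapsed C'|].
- move=> _ D g Hcv P h [dP [dS [PD [SD [Pf [Sf [R [dPw [HP Hh]]]]]]]]].
  have CD := ClosVal Hcv.
  have CP : closedp L phi P h.
    apply: closedp_tr (LemA hW hw1 R dPw).
    + by move=> u; split=> /HP.
    + by move=> u /HP Hu; rewrite Hh.
  split.
  + move=> u; split; first by move/(ClosVal_min Hcv CP) => [].
    move/HP => Hu; exact: (Emb hW CD R (b:=true) dPw Hu).1.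
  + by move=> u /(ClosVal_min Hcv CP) [].
Qed.
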